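(* Let $((A,\to),\mathrm{obs})$ be a quantitative abstract rewriting system with $\mathrm{obs}:A\to S$, and let $\rightsquigarrow\ \subseteq\ \to$ be a subrelation. Let $t\in A$ and assume: (i) $\rightsquigarrow$ is asymptotically complete for $\to$; (ii) $\mathrm{Lim}(t,\rightsquigarrow)$ contains a unique element, i.e. $\mathrm{Lim}(t,\rightsquigarrow)=\{\mathbf p\}$ for some $\mathbf p\in S$. Then (1) $[\![t]\!]$ is defined, and (2) every maximal $\rightsquigarrow$-sequence from $t$ has limit $[\![t]\!]$, i.e. $t\rightsquigarrow^{\mathrm{obs}}[\![t]\!]$ along each such sequence.
   Context: An abstract rewriting system (ARS) is a pair $(A,\to)$ with $\to\subseteq A\times A$. A $\to$-sequence from $t$ is a finite or infinite sequence $t=t_0\to t_1\to t_2\to\cdots$; it is maximal if it is infinite or ends in a $\to$-normal form (an element with no $\to$-successor); by convention a maximal sequence ending in a normal form $u$ is continued as the constant sequence $u,u,\dots$. An $\omega$-cpo is a poset $(S,\le)$ with least element $\bot$ in which every $\omega$-chain has a supremum. A quantitative ARS (QARS) is $((A,\to),\mathrm{obs})$ where $\mathrm{obs}:A\to S$ maps into an $\omega$-cpo and $t\to s$ implies $\mathrm{obs}(t)\le\mathrm{obs}(s)$. For a relation $R\subseteq\to$ write $t\,R^{\mathrm{obs}}\,\mathbf p$ if there is a maximal $R$-sequence $(t_n)_n$ from $t$ with $\sup_n\mathrm{obs}(t_n)=\mathbf p$; $\mathrm{Lim}(t,R)=\{\mathbf p\mid t\,R^{\mathrm{obs}}\,\mathbf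 p\}$. $[\![t]\!]$ denotes the greatest element of $\mathrm{Lim}(t,\to)$, and is said to be defined when this greatest element exists. A subrelation $\rightsquigarrow\subseteq\to$ is asymptotically complete for $\to$ if for all $t\in A$: $t\to^{\mathrm{obs}}\mathbf q$ implies $t\rightsquigarrow^{\mathrm{obs}}\mathbf p$ for some $\mathbf p$ with $\mathbf q\le\mathbf p$. *)

(* Defs.v *)
From HB Require Import structures.
From mathcomp Require Import all_boot all_order.
Set Implicit Arguments. Unset Strict Implicit. Unset Printing Implicit Defensive.
Import Order.TTheory.
Local Open Scope order_scope.

Section QARS.

Context {d : Order.disp_t} {S : bPOrderType d}.

Definition omega_chain (c : nat -> S) : Prop := forall n, c n <= c n.+1.

Definition is_sup (c : nat -> S) (s : S) : Prop :=
  (forall n, c n <= s) /\ (forall u, (forall n, c n <= u) -> s <= u).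

Definition omega_cpo : Prop :=
  forall c : nat -> S, omega_chain c -> exists s, is_sup c s.

Definition is_greatest (P : S -> Prop) (g : S) : Prop :=
  P g /\ (forall p, P p -> p <= g).

Context {A : Type}.

Definition normal_form (R : A -> A -> Prop) (a : A) : Prop := forall b, ~ R a b.

(* A maximal R-sequence from t, represented as an infinite sequence: every
   step is an R-step, except that once an R-normal form is reached the
   sequence continues constantly (the paper's convention). *)
Definition maximal_seq (R : A -> A -> Prop) (t : A) (f : nat -> A) : Prop :=
  f 0 = t /\
  (forall n, R (f n) (f n.+1) \/ (normal_form R (f n) /\ f n.+1 = f n)).

Definition is_QARS (step : A -> A -> Prop) (obs : A -> S) : Prop :=
  omega_cpo /\ (forall a b, step a b -> obs a <= obs b).

Definition obs_lim (obs : A -> S) (R : A -> A -> Prop) (t : A) (p : S) : Prop :=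
  exists f, maximal_seq R t f /\ is_sup (fun n => obs (f n)) p.

Definition Lim (obs : A -> S) (t : A) (R : A -> A -> Prop) : S -> Prop :=
  fun p => obs_lim obs R t p.

Definition sem_is (obs : A -> S) (step : A -> A -> Prop) (t : A) (q : S) : Prop :=
  is_greatest (Lim obs t step) q.

Definition asymptotically_complete (obs : A -> S)
  (rs step : A -> A -> Prop) : Prop :=
  forall t q, obs_lim obs step t q ->
    exists p, obs_lim obs rs t p /\ q <= p.

End QARS.

(* Main.v *)
Require Import Defs.
From HB Require Import structures.
From mathcomp Require Import all_boot all_order.
From Stdlib Require Import Classical ClassicalEpsilon.
Local Open Scope order_scope.
Import Order.POrderTheory.

Section Aux.
Context {d : Order.disp_t} {S : bPOrderType d} {A : Type}.

Lemma sup_unique (c : nat -> S) s1 s2 : is_sup c s1 -> is_sup c s2 -> s1 = s2.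
Proof.
move=> [h1 l1] [h2 l2]; apply/eqP; rewrite eq_le; apply/andP; split.
exact: l1. exact: l2.
Qed.

Lemma least_ex (P : nat -> Prop) : (exists n, P n) ->
  exists n, P n /\ forall k, (k < n)%N -> ~ P k.
Proof.
move=> [n Pn]; apply: NNPP => H.
have : forall m, forall k, (k < m)%N -> ~ P k.
  elim=> [|m IH] k //. rewrite ltnS leq_eqVlt => /orP [/eqP -> | /IH //].
  move=> Pm; apply: H; exists m; split => //.
by move=> /(_ n.+1 n (ltnSn n)); apply.
Qed.

End Aux.

Theorem mainTheorem1 (d : Order.disp_t) (S : bPOrderType d) (A : Type)
  (step rs : A -> A -> Prop) (obs : A -> S)
  (hQ : is_QARS step obs)
  (hsub : forall a b, rs a b -> step a b)
  (t : A)
  (hcomp : asymptotically_complete obs rs step)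
  (huniq : exists p, forall q, Lim obs t rs q <-> q = p) :
  exists sem : S, sem_is obs step t sem /\
    (forall f, maximal_seq rs t f -> is_sup (fun n => obs (f n)) sem).
Proof.
case: hQ => hcpo hmon.
case: huniq => p hp.
have pL : obs_lim obs rs t p by apply/hp.
have comp2 : forall q, obs_lim obs step t q -> q <= p.
  move=> q /hcomp [p' [/hp -> //]].
have chainrs : forall f, maximal_seq rs t f -> omega_chain (fun n => obs (f n)).
  move=> f [_ hf] n; case: (hf n) => [/hsub/hmon //| [_ ->]] //.
exists p; split; last first.
  move=> f hf; case: (hcpo _ (chainrs f hf)) => s hs.
  suff -> : p = s by [].
  symmetry; apply/hp; exists f; split => //.
split; last exact: comp2.
case: pL => f [[f0 hf] sf].
have [allrs | [n0 hn0]] : (forall n, rs (f n) (f n.+1)) \/ exists n, ~ rs (f n) (f n.+1).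
  apply: NNPP => H; apply H; left => n; apply: NNPP => Hn; apply H; right; by exists n.
  exists f; split => //; split => // n; left; exact: hsub.
case: (@least_ex (fun k => ~ rs (f k) (f k.+1)) (ex_intro _ n0 hn0)) => n [hn hmin].
pose h (a : A) : A := match excluded_middle_informative (exists b, step a b) with
  | left H => proj1_sig (constructive_indefinite_description _ H) | right _ => a end.
have hh : forall a, step a (h a) \/ (normal_form step a /\ h a = a).
  move=> a; rewrite /h; case: excluded_middle_informative => [H|H].
    left; exact: (proj2_sig (constructive_indefinite_description _ H)).
  right; split => // b sb; apply: H; by exists b.
have fnorm : normal_form rs (f n) /\ f n.+1 = f n.
  by case: (hf n) => // /hn.
have fconst : forall m, (n <= m)%N -> f m = f n.
  elim=> [|m IH]; first by rewrite leqn0 => /eqP ->.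
  rewrite leq_eqVlt => /orP [/eqP <- //| ]; rewrite ltnS => /IH e.
  case: (hf m) => [|[_ ->] //]; rewrite e => /(proj1 fnorm) [].
pose g k := if (k <= n)%N then f k else iter (k - n) h (f n).
have gmax : maximal_seq step t g.
  split; first by rewrite /g leq0n.
  move=> k; rewrite /g.
  case: (ltnP k n) => hk.
    have e1 : (k <= n)%N := ltnW hk; have e2 : (k.+1 <= n)%N := hk; rewrite /= ?e1 ?e2; left; apply: hsub; apply: NNPP => H; exact: (hmin k hk H).
  rewrite /=.
  case: (leqP k n) => hk2.
    have -> : k = n by apply/eqP; rewrite eqn_leq hk hk2.
    rewrite subSn // subnn /=; exact: hh.
  rewrite subSn; last exact: ltnW.
  rewrite iterS; exact: hh.
have gchain : omega_chain (fun k => obs (g k)).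
  move=> k; case: (gmax.2 k) => [/hmon // | [_ ->]] //.
case: (hcpo _ gchain) => q hq.
have pq : p <= q.
  apply: sf.2 => m; case: (leqP m n) => hm.
    have := hq.1 m; by rewrite /g hm.
  rewrite fconst ?(ltnW hm) //; have := hq.1 n; by rewrite /g leqnn.
have qp : q <= p by apply: comp2; exists g.
have -> : p = q by apply/eqP; rewrite eq_le pq qp.
by exists g.
Qed.
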